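(* Let $k\ge 4$ be an integer. For every tree $T$ of order $n\ge k$, $W_{tsp,k}(T)=2W_k(T)$. If $G$ is a finite simple connected graph of order $n\ge k$ that is not a tree, then $W_{tsp,k}(G)<2W_k(G)$.
   Context: For a set $S$ of $k$ vertices of a connected graph $G$, $\mathrm{tsp}_k(S)$ is the length (number of edge traversals, with multiplicity) of a shortest closed walk in $G$ visiting all vertices of $S$, and $W_{tsp,k}(G)=\sum_{S\subseteq V,\,|S|=k}\mathrm{tsp}_k(S)$. The Steiner distance $d_k(S)$ is the minimum number of edges of a connected subgraph (a subtree) of $G$ containing $S$, and $W_k(G)=\sum_{S\subseteq V,\,|S|=k}d_k(S)$. *)

(* Defs.v *)
From mathcomp Require Import all_boot.
From Stdlib Require Import ClassicalEpsilon.
Set Implicit Arguments. Unset Strict Implicit. Unset Printing Implicit Defensive.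

Section Graphs.
Variables (T : finType) (e : rel T).

Definition simple_graph := symmetric e /\ irreflexive e.

Definition connected_graph := forall x y : T, connect e x y.

Definition acyclic_graph :=
  ~ exists c : seq T, [&& uniq c, 2 < size c & cycle e c].

Definition is_tree := connected_graph /\ acyclic_graph.

Definition closed_walk_len (S : {set T}) (m : nat) : bool :=
  [exists x : T, exists t : m.-tuple T,
     [&& path e x t, last x t == x & S \subset (x :: tval t)]].

Definition connected_subgraph_size (S : {set T}) (m : nat) : bool :=
  [exists A : {set T}, exists F : {set {set T}},
     [&& #|F| == m,
         [forall f in F, exists u, exists v,
             [&& e u v, u \in A, v \in A & f == [set u; v]]],
         S \subset A &
         [forall x in A, forall y in A,
             connect (fun u v => [set u; v] \in F) x y]]].

Definition least_nat (P : nat -> bool) : nat :=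
  match excluded_middle_informative (exists m, P m) with
  | left h => ex_minn h
  | right _ => 0
  end.

Definition tsp (S : {set T}) : nat := least_nat (closed_walk_len S).

Definition steiner (S : {set T}) : nat := least_nat (connected_subgraph_size S).

Definition W_tsp (k : nat) : nat := \sum_(S : {set T} | #|S| == k) tsp S.
Definition W_steiner (k : nat) : nat := \sum_(S : {set T} | #|S| == k) steiner S.

End Graphs.

(* Main.v *)
Require Import Defs.
From mathcomp Require Import all_boot zify.
From Stdlib Require Import ClassicalEpsilon.
Set Implicit Arguments. Unset Strict Implicit. Unset Printing Implicit Defensive.

Lemma twice_size (U : eqType) (s : seq U) :
  (forall y, y \in s -> 2 <= count_mem y s) -> 2 * size (undup s) <= size s.
Proof.
move=> H.
have -> : size s = sumn [seq count_mem x s | x <- undup s].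
  rewrite -(perm_size (perm_count_undup s)) size_flatten /shape -map_comp.
  by apply: congr1; apply: eq_map => x /=; rewrite size_nseq.
have : {subset undup s <= s} by move=> y; rewrite mem_undup.
elim: (undup s) => [|y l IH] //= sub.
rewrite mulnS; apply: leq_add.
  by apply: H; apply: sub; rewrite inE eqxx.
by apply: IH => z zl; apply: sub; rewrite inE zl orbT.
Qed.

Lemma ar_half g : g./2 + g./2 <= g <= (g./2 + g./2).+1.
Proof. move: (odd_double_half g); rewrite -addnn; case: odd => /= ?; apply/andP; split; lia. Qed.
Lemma ar_g5 k g : 4 <= k -> k < g -> 5 <= g.
Proof. lia. Qed.
Lemma ar_idx g h : h + h <= g <= (h + h).+1 -> 5 <= g -> [/\ 0 < g, 1 < g, h < g & h.+1 < g].
Proof. move=> /andP[*] *; split; lia. Qed.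
Lemma ar_cases g h l : h + h <= g <= (h + h).+1 -> 5 <= g -> l < g ->
  [\/ 0 <= l < 0 + 1, 1 <= l < 1 + (h - 1), h <= l < h + 1 | h.+1 <= l < h.+1 + (g - h.+1)].
Proof.
move=> /andP[*] *.
case: (ltnP l 1) => ?; first by constructor 1; lia.
case: (ltnP l h) => ?; first by constructor 2; lia.
case: (ltnP l h.+1) => ?; first by constructor 3; lia.
by constructor 4; lia.
Qed.
Lemma ar_arcs g h : h + h <= g <= (h + h).+1 -> 5 <= g ->
  [/\ 2 * 1 < g, 2 * (h - 1) < g, 2 * (g - h.+1) < g, 1 + (h - 1) = h & h.+1 + (g - h.+1) = g].
Proof. move=> /andP[*] *; split; lia. Qed.
Lemma ar_final a g : 2 * a <= g -> 5 <= g -> g <= a -> False.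
Proof. lia. Qed.

Section G.
Variables (T : finType) (e : rel T).
Hypothesis esymm : symmetric e.
Hypothesis eirr : irreflexive e.

Fixpoint wedges (x : T) (t : seq T) : seq {set T} :=
  if t is y :: t' then [set x; y] :: wedges y t' else [::].

Lemma wedges_cat x t1 t2 : wedges x (t1 ++ t2) = wedges x t1 ++ wedges (last x t1) t2.
Proof. by elim: t1 x => [|y t1 IH] x //=; rewrite IH. Qed.

Lemma size_wedges x t : size (wedges x t) = size t.
Proof. by elim: t x => [|y t IH] x //=; rewrite IH. Qed.

Lemma wedges_split x t f : f \in wedges x t ->
  exists t1 v t2, t = t1 ++ v :: t2 /\ f = [set last x t1; v].
Proof.
elim: t x => [|y t IH] x //=; rewrite inE => /orP[/eqP ->|].
  by exists [::], y, t.
move=> /IH [t1 [v [t2 [-> ->]]]]; by exists (y :: t1), v, t2.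
Qed.

Lemma path_avoid (r : rel T) x s :
  path r x s -> (forall a b, r a b -> [set a; b] \notin wedges x s -> False) -> True.
Proof. by []. Qed.

Definition eavoid (f : {set T}) := fun a b => e a b && ([set a; b] != f).

Lemma path_eavoid f x s : path e x s -> f \notin wedges x s -> path (eavoid f) x s.
Proof.
elim: s x => [|y s IH] x //= /andP[exy ps]; rewrite inE negb_or => /andP[nf nf'].
by rewrite /eavoid exy eq_sym nf /= IH.
Qed.

Lemma once x t f : path e x t -> last x t = x -> f \in wedges x t ->
  count_mem f (wedges x t) = 1 ->
  exists c : seq T, [/\ uniq c, 2 < size c, size c <= size t & cycle e c].
Proof.
move=> pt lt /wedges_split [t1 [v [t2 [dt df]]]].
rewrite dt wedges_cat /= count_cat /= -df eqxx /=.
move=> hc.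
have n1 : f \notin wedges x t1.
  apply/count_memPn; move: hc; set a := count _ (wedges x t1); set b := count _ (wedges v t2). lia.
have n2 : f \notin wedges v t2.
  apply/count_memPn; move: hc; set a := count _ (wedges x t1); set b := count _ (wedges v t2). lia.
move: pt lt; rewrite dt cat_path last_cat /= => /andP[p1 /andP[euv p2]] lt.
have prest : path e v (t2 ++ t1) by rewrite cat_path p2 lt p1.
have nrest : f \notin wedges v (t2 ++ t1) by rewrite wedges_cat lt mem_cat negb_or n1 n2.
have lrest : last v (t2 ++ t1) = last x t1 by rewrite last_cat lt.
move: lrest; case/shortenP: (path_eavoid prest nrest) => p' pp' up' sub' lp'.
exists (v :: p'); split => //.
- have uv : last x t1 != v by apply/negP => /eqP E; move: euv; rewrite E eirr.
  case: p' pp' up' sub' lp' => [|w [|w' p'']] //=.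
    by move=> _ _ _ E; move: uv; rewrite E eqxx.
  rewrite /eavoid df => /andP[/andP[_ H] _] _ _ E; move: H; rewrite -E setUC eqxx //.
- have : size (v :: p') <= size (v :: (t2 ++ t1)).
    apply: uniq_leq_size => // z; rewrite !inE => /orP[->//|/sub' ->]; by rewrite orbT.
  by rewrite /= !size_cat /= addnS addnC.
- rewrite /cycle rcons_path (sub_path _ pp') ?lp' //.
  by move=> a b /andP[].
Qed.


Lemma twice x t : path e x t -> last x t = x ->
  (forall c, uniq c -> 2 < size c -> cycle e c -> size t < size c) ->
  forall f, f \in wedges x t -> 2 <= count_mem f (wedges x t).
Proof.
move=> pt lt nc f fin.
have : 0 < count_mem f (wedges x t) by rewrite -has_count has_pred1.
case E: (count_mem f (wedges x t)) => [|[|n]] // _.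
have [c [uc sc sct cc]] := once pt lt fin E.
by have := nc c uc sc cc; rewrite ltnNge sct.
Qed.

Lemma twice_card x t : path e x t -> last x t = x ->
  (forall c, uniq c -> 2 < size c -> cycle e c -> size t < size c) ->
  2 * size (undup (wedges x t)) <= size t.
Proof.
move=> pt lt nc; rewrite -(size_wedges x t); apply: twice_size.
exact: twice.
Qed.

Lemma wedges_edge x t f : path e x t -> f \in wedges x t ->
  exists u v, [&& e u v, u \in x :: t, v \in x :: t & f == [set u; v]].
Proof.
elim: t x => [|y t IH] x //= /andP[exy pt]; rewrite inE => /orP[/eqP ->|].
  by exists x, y; rewrite exy !inE !eqxx orbT.
move=> /(IH _ pt) [u [v /and4P[euv ut vt fe]]]; exists u, v.
by rewrite euv fe !(in_cons x) ut vt !orbT.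
Qed.

Lemma wedges_connect (F : {set {set T}}) x t : {subset wedges x t <= F} ->
  forall y, y \in x :: t -> connect (fun a b => [set a; b] \in F) x y.
Proof.
elim: t x => [|z t IH] x sub y /=.
  by rewrite inE => /eqP ->; exact: connect0.
rewrite inE => /orP[/eqP -> //|yt].
apply: (@connect_trans _ _ z).
  by apply: connect1; apply: sub; rewrite /= inE eqxx.
by apply: IH => // f ft; apply: sub; rewrite /= inE ft orbT.
Qed.

Lemma card_seq_undup (U : finType) (s : seq U) : #|[set f in s]| = size (undup s).
Proof.
rewrite cardsE; rewrite -(eq_card (mem_undup s)); apply/card_uniqP; exact: undup_uniq.
Qed.

Lemma walk_subgraph (S : {set T}) x t : path e x t -> S \subset (x :: t) ->
  connected_subgraph_size e S (size (undup (wedges x t))).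
Proof.
move=> pt sS; apply/existsP; exists [set y in x :: t].
apply/existsP; exists [set f in wedges x t].
apply/and4P; split.
- by rewrite card_seq_undup.
- apply/forallP => f; apply/implyP; rewrite inE => /(wedges_edge pt) [u [v /and4P[euv ut vt fe]]].
  by apply/existsP; exists u; apply/existsP; exists v; rewrite euv fe !in_set ut vt.
- by apply/subsetP => y /(subsetP sS); rewrite inE.
apply/forallP => a; apply/implyP; rewrite inE => ha.
apply/forallP => b; apply/implyP; rewrite inE => hb.
have sub : {subset wedges x t <= [set f in wedges x t]} by move=> f; rewrite inE.
have symr : connect_sym (fun a b => [set a; b] \in [set f in wedges x t]).
  by apply: sym_connect_sym => a' b'; rewrite setUC.
apply: (@connect_trans _ _ x); last exact: (wedges_connect sub hb).
by rewrite symr; exact: (wedges_connect sub ha).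
Qed.


Lemma splice x t u v : path e x t -> last x t = x -> u \in x :: t -> e u v ->
  exists t', [/\ path e x t', last x t' = x, size t' = (size t).+2,
     {subset x :: t <= x :: t'} & v \in x :: t'].
Proof.
move=> pt lt; rewrite inE => /orP[/eqP ->|ut] euv.
  exists (v :: x :: t); split => //=.
  - by rewrite euv (esymm v x) euv pt.
  - by move=> z; rewrite !inE => /orP[->|->]; rewrite ?orbT.
  - by rewrite !inE eqxx orbT.
case/splitPr: ut pt lt => t1 t2 pt lt.
exists (t1 ++ u :: v :: u :: t2); split.
- move: pt; rewrite !cat_path /= => /andP[-> /andP[-> ->]].
  by rewrite euv esymm euv.
- by move: lt; rewrite !last_cat.
- by rewrite !size_cat /= !addnS.
- move=> z; rewrite !inE !mem_cat !inE.
  by case/orP=> [->//|/orP[->|/orP[->|->]]]; rewrite ?orbT.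
- by rewrite !inE !mem_cat !inE eqxx !orbT.
Qed.

Definition redges (r : rel T) : {set {set T}} :=
  [set f | [exists u, exists v, r u v && (f == [set u; v])]].

Lemma crossing (r : rel T) (B : {set T}) x y : connect r x y -> x \in B -> y \notin B ->
  exists u v, [/\ u \in B, v \notin B & r u v].
Proof.
case/connectP => p; elim: p x => [|z p IH] x /=.
  by move=> _ -> ->.
case/andP=> rxz pz ly xB yB.
case zB: (z \in B); first exact: (IH z pz ly zB yB).
by exists x, z; rewrite zB.
Qed.

Lemma grow (r : rel T) (A : {set T}) x :
  (forall u v, r u v -> e u v) -> (forall u v, r u v -> v \in A) ->
  (forall y, y \in A -> connect r x y) ->
  forall d (B : {set T}) t, x \in B -> B \subset A -> path e x t -> last x t = x ->
  {subset B <= x :: t} -> #|B| + d <= #|A| ->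
  exists (B' : {set T}) (t' : seq T) (E : {set {set T}}),
    [/\ x \in B', B' \subset A, #|B'| = #|B| + d, {subset B' <= x :: t'} &
        [/\ path e x t', last x t' = x, size t' = size t + 2 * d &
            [/\ E \subset redges r, #|E| = d & forall f : {set T}, f \in E -> f \subset B']]].
Proof.
move=> hre hrA hconn; elim=> [|d IH] B t xB BA pt lt Bt hcard.
  exists B, t, set0; split; rewrite ?addn0 ?muln0 //; split => //; split.
  - exact: sub0set.
  - by rewrite cards0.
  - by move=> f; rewrite inE.
have hc' : #|B| + d <= #|A| by apply: leq_trans hcard; rewrite addnS.
have [B' [t' [E [xB' B'A cB' B't' [pt' lt' st' [ER cE EB']]]]]] :=
  IH B t xB BA pt lt Bt hc'.
have : ~~ (A \subset B').
  apply/negP => AB; have := subset_leq_card AB; rewrite cB'; move: hcard.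
  by rewrite addnS ltnNge => /negP.
case/subsetPn => y yA yB'.
have [u [v [uB' vB' ruv]]] := crossing (hconn y yA) xB' yB'.
have [t'' [pt'' lt'' st'' sub'' vt'']] := splice pt' lt' (B't' u uB') (hre u v ruv).
have vE : [set u; v] \notin E.
  apply/negP => /EB' /subsetP /(_ v); rewrite !inE eqxx orbT => /(_ isT).
  by apply/negP.
exists (v |: B'), t'', ([set u; v] |: E); split.
- by rewrite inE xB' orbT.
- by rewrite subUset sub1set (hrA u v ruv) B'A.
- by rewrite cardsU1 vB' cB' addnS.
- move=> z; rewrite !inE => /orP[/eqP -> //|zB]; exact: sub'' (B't' z zB).
split => //.
  by rewrite st'' st' mulnS addnCA add2n.
split.
- rewrite subUset sub1set ER andbT inE.
  by apply/existsP; exists u; apply/existsP; exists v; rewrite ruv eqxx.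
- by rewrite cardsU1 vE cE.
- move=> f; rewrite !inE => /orP[/eqP ->|fE].
    by rewrite subUset !sub1set !inE eqxx uB' orbT.
  by apply: subset_trans (EB' f fE) _; exact: subsetUr.
Qed.


Lemma least_nat_le (P : pred nat) m : P m -> least_nat P <= m.
Proof.
move=> Pm; rewrite /least_nat; case: excluded_middle_informative => [h|[]]; last by exists m.
by case: ex_minnP => n _ /(_ m Pm).
Qed.

Lemma least_natP (P : pred nat) : (exists m, P m) -> P (least_nat P).
Proof.
move=> h; rewrite /least_nat; case: excluded_middle_informative => [h'|//].
by case: ex_minnP.
Qed.

Lemma cwl_intro (S : {set T}) x t : path e x t -> last x t = x -> {subset S <= x :: t} ->
  closed_walk_len e S (size t).
Proof.
move=> pt lt St; apply/existsP; exists x; apply/existsP; exists (in_tuple t).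
by rewrite /= pt lt eqxx; apply/subsetP => y /St.
Qed.

Lemma cwl_elim (S : {set T}) m : closed_walk_len e S m ->
  exists x t, [/\ size t = m, path e x t, last x t = x & {subset S <= x :: t}].
Proof.
case/existsP => x /existsP [t /and3P[pt /eqP lt /subsetP St]].
by exists x, (tval t); rewrite size_tuple.
Qed.

Lemma pair_edge (u v u' v' : T) : [set u; v] = [set u'; v'] -> e u' v' -> e u v /\ v \in [set u'; v'].
Proof.
move=> E euv'; split; last by rewrite -E !inE eqxx orbT.
have uv' : u' != v' by apply/negP => /eqP h; move: euv'; rewrite h eirr.
have hu : u \in [set u'; v'] by rewrite -E !inE eqxx.
have hv : v \in [set u'; v'] by rewrite -E !inE eqxx orbT.
have hu' : u' \in [set u; v] by rewrite E !inE eqxx.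
have hv' : v' \in [set u; v] by rewrite E !inE eqxx orbT.
move: hu hv hu' hv'; rewrite !inE.
case/orP=> /eqP hu; case/orP=> /eqP hv; rewrite hu hv.
- by move=> _ /orP[] /eqP h; move: uv'; rewrite h eqxx.
- by [].
- by rewrite esymm.
- by move=> /orP[] /eqP h; move: uv'; rewrite h eqxx.
Qed.

Section Conn.
Hypothesis hconn : connected_graph e.

Lemma full_walk (x : T) : exists t, [/\ path e x t, last x t = x & forall y, y \in x :: t].
Proof.
have := @grow e [set: T] x (fun _ _ h => h) (fun _ _ _ => in_setT _)
  (fun y _ => hconn x y) (#|T|.-1) [set x] [::].
have cT : 0 < #|T| by apply/card_gt0P; exists x.
case => //.
- by rewrite inE.
- by move=> y; rewrite !inE.
- by rewrite cards1 cardsT add1n prednK.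
move=> B [t [E [xB BT cB Bt [pt lt _ _]]]].
exists t; split => // y; apply: Bt.
have : B == [set: T] by rewrite eqEcard subsetT cB cardsT cards1 add1n prednK // leqnn.
by move/eqP ->; rewrite inE.
Qed.

Lemma tsp_exists (S : {set T}) (x : T) : exists m, closed_walk_len e S m.
Proof.
have [t [pt lt ht]] := full_walk x.
by exists (size t); apply: cwl_intro pt lt (fun y _ => ht y).
Qed.

Lemma steiner_exists (S : {set T}) (x : T) : exists m, connected_subgraph_size e S m.
Proof.
have [t [pt lt ht]] := full_walk x.
exists (size (undup (wedges x t))); apply: walk_subgraph pt _.
by apply/subsetP => y _; exact: ht.
Qed.

Lemma sub_unpack (S : {set T}) m x : connected_subgraph_size e S m -> x \in S ->
  exists (A : {set T}) t, [/\ S \subset A, #|A| <= m.+1, path e x t, last x t = x &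
     size t = 2 * (#|A|.-1) /\ {subset A <= x :: t}].
Proof.
case/existsP => A /existsP [F /and4P[/eqP cF /forallP hF SA /forallP hA]] xS.
have xA : x \in A by exact: (subsetP SA).
set r := fun a b => [set a; b] \in F.
have hr : forall u v, r u v -> e u v /\ v \in A.
  move=> u v ruv; have := hF [set u; v]; rewrite (ruv : [set u; v] \in F) /= => /existsP [u' /existsP [v' /and4P[e' u'A v'A /eqP E]]].
  have [euv vin] := pair_edge E e'; split => //.
  by move: vin; rewrite !inE => /orP[] /eqP ->.
have hc : forall y, y \in A -> connect r x y.
  by move=> y yA; have := hA x; rewrite xA /= => /forallP /(_ y); rewrite yA.
have cA : 0 < #|A| by apply/card_gt0P; exists x.
have := @grow r A x (fun u v h => (hr u v h).1) (fun u v h => (hr u v h).2) hc (#|A|.-1) [set x] [::].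
case => //.
- by rewrite inE.
- by rewrite sub1set.
- by move=> y; rewrite !inE.
- by rewrite cards1 add1n prednK.
move=> B [t [E [xB BA cB Bt [pt lt st [ER cE _]]]]].
exists A, t; split => //.
- rewrite -(prednK cA) ltnS -cE -cF.
  apply: subset_leq_card; apply: subset_trans ER _.
  apply/subsetP => f; rewrite inE => /existsP [u /existsP [v /andP[ruv /eqP ->]]]; exact: ruv.
split; first by rewrite st.
have : B == A by rewrite eqEcard BA cB cards1 add1n prednK // leqnn.
by move/eqP => <-.
Qed.

Lemma tsp_le (S : {set T}) x : x \in S -> tsp e S <= 2 * steiner e S.
Proof.
move=> xS.
have hs := least_natP (steiner_exists S x); rewrite -/(steiner e S) in hs.
have [A [t [SA cA pt lt [st At]]]] := sub_unpack hs xS.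
apply: (@leq_trans (size t)).
  apply: least_nat_le; apply: cwl_intro pt lt _.
  by move=> y /(subsetP SA) /At.
by rewrite st leq_mul2l /= -ltnS; case: #|A| cA.
Qed.

Lemma tsp_ge (S : {set T}) (x : T) : acyclic_graph e -> 2 * steiner e S <= tsp e S.
Proof.
move=> ac.
have := least_natP (tsp_exists S x); rewrite -/(tsp e S).
case/cwl_elim => y [t [st pt lt St]]; rewrite -st.
have hs := walk_subgraph pt (S:=S) (introT subsetP St).
apply: leq_trans (twice_card pt lt _).
  by rewrite leq_mul2l /=; apply: least_nat_le.
move=> c uc sc cc; exfalso; apply: ac; exists c; by rewrite uc sc cc.
Qed.


Lemma wedges_rel (r : rel T) y p f : path r y p -> f \in wedges y p ->
  exists a b, r a b && (f == [set a; b]).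
Proof.
elim: p y => [|z p IH] y //= /andP[ryz pp]; rewrite inE => /orP[/eqP ->|].
  by exists y, z; rewrite ryz eqxx.
exact: IH.
Qed.

Lemma path_in (r : rel T) (A : {set T}) y p : (forall u v, r u v -> v \in A) ->
  path r y p -> forall z, z \in p -> z \in A.
Proof.
move=> hA; elim: p y => [|w p IH] y //= /andP[ryw pp] z; rewrite inE => /orP[/eqP ->|].
  exact: hA ryw.
exact: IH pp z.
Qed.

Lemma middle_set (A B : {set T}) d : A \subset B -> #|A| + d <= #|B| ->
  exists S : {set T}, [/\ A \subset S, S \subset B & #|S| = #|A| + d].
Proof.
move=> AB; elim: d => [|d IH] hc; first by exists A; rewrite addn0.
have hc' : #|A| + d <= #|B| by apply: leq_trans hc; rewrite addnS.
have [S [AS SB cS]] := IH hc'.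
have : ~~ (B \subset S).
  apply/negP => BS; have := subset_leq_card BS; rewrite cS; move: hc.
  by rewrite addnS ltnNge => /negP.
case/subsetPn => y yB yS.
exists (y |: S); split.
- by apply: subset_trans AS _; exact: subsetUr.
- by rewrite subUset sub1set yB SB.
- by rewrite cardsU1 yS cS addnS.
Qed.

Section Cyc.
Variables (x0 : T) (p0 : seq T).
Hypothesis uc : uniq (x0 :: p0).
Hypothesis ccyc : cycle e (x0 :: p0).
Hypothesis c3 : 2 < size (x0 :: p0).

Let g := size (x0 :: p0).
Definition cc i := nth x0 (rcons (x0 :: p0) x0) i.

Lemma cc_edge i : i < g -> e (cc i) (cc i.+1).
Proof.
move=> ig; move: ccyc => /= /(pathP x0) /(_ i); rewrite size_rcons; apply; exact: ig.
Qed.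

Lemma cc_lt i : i < g -> cc i = nth x0 (x0 :: p0) i.
Proof. by move=> ig; rewrite /cc nth_rcons ig. Qed.

Lemma cc_g : cc g = x0.
Proof. by rewrite /cc nth_rcons ltnn eqxx. Qed.

Lemma cc_inj a b : a <= g -> b <= g -> cc a = cc b ->
  a = b \/ (a = 0 /\ b = g) \/ (a = g /\ b = 0).
Proof.
move=> ha hb; move: ha hb; rewrite leq_eqVlt => /orP[/eqP ->|ag]; rewrite leq_eqVlt => /orP[/eqP ->|bg]; try by left.
- rewrite cc_g (cc_lt bg) => h.
  have := nth_uniq x0 (isT : 0 < g) bg uc; rewrite -h eqxx /= => E0.
  by right; right; split => //; apply/eqP; rewrite eq_sym -E0.
- rewrite cc_g (cc_lt ag) => h.
  have := nth_uniq x0 (isT : 0 < g) ag uc; rewrite h eqxx /= => E0.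
  by right; left; split => //; apply/eqP; rewrite eq_sym -E0.
- by rewrite (cc_lt ag) (cc_lt bg) => /eqP; rewrite nth_uniq // => /eqP; left.
Qed.

Lemma E_inj l l' : l < g -> l' < g -> [set cc l; cc l.+1] = [set cc l'; cc l'.+1] -> l = l'.
Proof.
move=> lg l'g E.
have h1 : cc l \in [set cc l'; cc l'.+1] by rewrite -E !inE eqxx.
have h2 : cc l.+1 \in [set cc l'; cc l'.+1] by rewrite -E !inE eqxx orbT.
move: h1 h2; rewrite !inE => /orP[] /eqP h1 /orP[] /eqP h2.
- by case: (cc_inj (ltnW lg) (ltnW l'g) h1) => [|[][]] ; lia.
- by case: (cc_inj (ltnW lg) (ltnW l'g) h1) => [|[][]] ; lia.
- case: (cc_inj (ltnW lg) l'g h1) => [|[][]]; case: (cc_inj lg (ltnW l'g) h2) => [|[][]]; lia.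
- by case: (cc_inj lg l'g h2) => [|[][]] ; lia.
Qed.

Lemma arc_path i n : i + n <= g -> path e (cc i) (map cc (iota i.+1 n)).
Proof.
elim: n i => [|n IH] i //= h; rewrite cc_edge ?IH //; lia.
Qed.

Lemma arc_last i n : last (cc i) (map cc (iota i.+1 n)) = cc (i + n).
Proof. by elim: n i => [|n IH] i /=; rewrite ?addn0 // IH addSnnS. Qed.

Lemma arc_wedges i n : wedges (cc i) (map cc (iota i.+1 n)) =
  map (fun l => [set cc l; cc l.+1]) (iota i n).
Proof. by elim: n i => [|n IH] i //=; rewrite IH. Qed.

Lemma arc_in_F (A : {set T}) (F : {set {set T}}) m i n :
  (forall u v, [set u; v] \in F -> e u v /\ v \in A) ->
  (forall a b, a \in A -> b \in A -> connect (fun u v => [set u; v] \in F) a b) ->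
  #|A| <= m.+1 -> 2 * m <= g -> 2 * n < g -> i + n <= g ->
  (forall c', uniq c' -> 2 < size c' -> cycle e c' -> g <= size c') ->
  cc i \in A -> cc (i + n) \in A ->
  forall l, i <= l < i + n -> [set cc l; cc l.+1] \in F.
Proof.
move=> hF hc cA hm hn hin hg iA jA l /andP[il li].
set r := fun u v => [set u; v] \in F.
have hrA : forall u v, r u v -> v \in A by move=> u v /hF [].
have : connect r (cc (i + n)) (cc i) by exact: hc.
case/connectP => p pp lp.
move: lp; case/shortenP: pp => p' pp' up' sub' lp'.
have p'A : forall z, z \in cc (i + n) :: p' -> z \in A.
  move=> z; rewrite inE => /orP[/eqP -> //|]; exact: path_in hrA pp' z.
have sp' : size p' <= m.
  have : #|cc (i + n) :: p'| <= #|A|.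
    by apply: subset_leq_card; apply/subsetP => z; exact: p'A.
  by rewrite (card_uniqP up') /=; lia.
have pe' : path e (cc (i + n)) p' by apply: sub_path pp' => u v /hF [].
set t := map cc (iota i.+1 n) ++ p'.
have pt : path e (cc i) t by rewrite cat_path arc_path // arc_last pe'.
have lt : last (cc i) t = cc i by rewrite last_cat arc_last lp'.
have st : size t < g.
 rewrite /t size_cat size_map size_iota. have HH : forall mm nn pp gg : nat, pp <= mm -> 2*mm <= gg -> 2*nn < gg -> nn+pp < gg by move=> mm nn pp gg; lia.
 exact: HH sp' hm hn.
have lin : [set cc l; cc l.+1] \in map (fun l => [set cc l; cc l.+1]) (iota i n).
  by apply/mapP; exists l => //; rewrite mem_iota il.
have Ein : [set cc l; cc l.+1] \in wedges (cc i) t.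
  by rewrite /t wedges_cat arc_wedges mem_cat lin.
have h2 := twice pt lt (fun c' u' s' c'' => leq_trans st (hg c' u' s' c'')) Ein.
have un : uniq (map (fun l => [set cc l; cc l.+1]) (iota i n)).
  rewrite map_inj_in_uniq ?iota_uniq // => a b; rewrite !mem_iota => ha hb.
  apply: E_inj; lia.
move: h2; rewrite /t wedges_cat arc_wedges arc_last count_cat (count_uniq_mem _ un) lin.
move=> h2.
have : [set cc l; cc l.+1] \in wedges (cc (i + n)) p'.
  by rewrite -has_pred1 has_count; move: h2; case: (count _ _).
case/(wedges_rel pp') => a [b /andP[rab /eqP ->]]; exact: rab.
Qed.


End Cyc.

Lemma wit_edges (A : {set T}) (F : {set {set T}}) :
  (forall f : {set T}, (f \in F) ==> [exists u, exists v, [&& e u v, u \in A, v \in A & f == [set u; v]]]) ->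
  forall u v, [set u; v] \in F -> e u v /\ v \in A.
Proof.
move=> hF u v ruv; have := hF [set u; v]; rewrite ruv /= => /existsP [u' /existsP [v' /and4P[e' u'A v'A /eqP E]]].
have [euv vin] := pair_edge E e'; split => //.
by move: vin; rewrite !inE => /orP[] /eqP ->.
Qed.

Lemma witness_card (A : {set T}) (F : {set {set T}}) x :
  (forall u v, [set u; v] \in F -> e u v /\ v \in A) ->
  (forall y, y \in A -> connect (fun a b => [set a; b] \in F) x y) -> x \in A ->
  #|A| <= #|F|.+1.
Proof.
move=> hr hc xA.
have cA : 0 < #|A| by apply/card_gt0P; exists x.
have := @grow (fun a b => [set a; b] \in F) A x (fun u v h => (hr u v h).1) (fun u v h => (hr u v h).2) hc (#|A|.-1) [set x] [::].
case => //.
- by rewrite inE.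
- by rewrite sub1set.
- by move=> y; rewrite !inE.
- by rewrite cards1 add1n prednK.
move=> B [t [E [xB BA cB Bt [pt lt st [ER cE _]]]]].
rewrite -(prednK cA) ltnS -cE.
apply: subset_leq_card; apply: subset_trans ER _.
apply/subsetP => f; rewrite inE => /existsP [u /existsP [v /andP[ruv /eqP ->]]]; exact: ruv.
Qed.

Lemma shortest_cycle : ~ acyclic_graph e ->
  exists x0 p0, [/\ uniq (x0 :: p0), cycle e (x0 :: p0), 2 < size (x0 :: p0) &
    forall c', uniq c' -> 2 < size c' -> cycle e c' -> size (x0 :: p0) <= size c'].
Proof.
move=> ac.
pose P n := [exists t : n.-tuple T, uniq t && (2 < n) && cycle e t].
have exP : exists n, P n.
  case: (excluded_middle_informative (exists c : seq T, [&& uniq c, 2 < size c & cycle e c])) => [[c hc]|nh]; last by case: ac.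
  exists (size c); apply/existsP; exists (in_tuple c); by case/and3P: hc => -> -> ->.
case: (ex_minnP exP) => g /existsP [ct /andP[/andP[uct g3] cct]] gmin.
case: ct uct g3 cct => [[|x0 p0] /= /eqP sz] uct g3 cct; first by move: g3; rewrite -sz.
exists x0, p0; split => //; rewrite ?sz //.
move=> c' uc' sc' cc'; apply: gmin; apply/existsP; exists (in_tuple c').
by rewrite /= uc' sc' cc'.
Qed.


Lemma strict_exists k : 4 <= k -> k <= #|T| -> ~ acyclic_graph e ->
  exists S : {set T}, #|S| = k /\ tsp e S < 2 * steiner e S.
Proof.
move=> k4 kT ac.
have [x0 [p0 [uc ccyc c3 hg]]] := shortest_cycle ac.
have pw : path e x0 (rcons p0 x0) by exact: ccyc.
have lw : last x0 (rcons p0 x0) = x0 by rewrite last_rcons.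
have cw : forall y, y \in x0 :: p0 -> y \in x0 :: rcons p0 x0.
  by move=> y; rewrite !inE mem_rcons inE; case/orP => ->; rewrite ?orbT.
have sw : size (rcons p0 x0) = size (x0 :: p0) by rewrite size_rcons.
have cB : #|[set y in x0 :: p0]| = size (x0 :: p0) by rewrite cardsE; apply/card_uniqP.
have xB : x0 \in [set y in x0 :: p0] by rewrite inE mem_head.
have Bw : {subset [set y in x0 :: p0] <= x0 :: rcons p0 x0} by move=> y; rewrite inE; exact: cw.
case: (leqP (size (x0 :: p0)) k) => [gk|kg].
  have BT : [set y in x0 :: p0] \subset [set: T] by exact: subsetT.
  have hcd : #|[set y in x0 :: p0]| + (k - size (x0 :: p0)) <= #|[set: T]| by rewrite cB cardsT subnKC.
  have [S [t [E [xS _ cS St [pt lt st _]]]]] :=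
    @grow e [set: T] x0 (fun _ _ h => h) (fun _ _ _ => in_setT _) (fun y _ => hconn x0 y) _ _ _ xB BT pw lw Bw hcd.
  have cSk : #|S| = k by rewrite cS cB subnKC.
  exists S; split => //.
  have h1 : tsp e S <= size t by apply: least_nat_le; apply: cwl_intro pt lt St.
  have hs := least_natP (steiner_exists S x0); rewrite -/(steiner e S) in hs.
  have [A [t2 [SA cA _ _ _]]] := sub_unpack hs xS.
  have kA : k <= #|A| by rewrite -cSk; exact: subset_leq_card.
  move: h1 st sw gk c3 kA cA.
  move: (tsp e S) (steiner e S) (size t) (size (rcons p0 x0)) (size (x0 :: p0)) #|A|.
  move=> a b c d f z; lia.
pose g := size (x0 :: p0).
pose h := g./2.
have hh : h + h <= g <= (h + h).+1 := ar_half g.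
have g5 : 5 <= g := ar_g5 k4 kg.
have [g0 g1 gh gh1] := ar_idx hh g5.
have ccin : forall i, i < g -> cc x0 p0 i \in x0 :: p0 by move=> i ig; rewrite cc_lt // mem_nth.
set S4 := [set y in [:: cc x0 p0 0; cc x0 p0 1; cc x0 p0 h; cc x0 p0 h.+1]].
have c4 : #|S4| <= 4 by rewrite cardsE; exact: card_size.
have c4k : #|S4| <= k by apply: leq_trans c4 k4.
have S4B : S4 \subset [set y in x0 :: p0].
  apply/subsetP => y; rewrite !inE => /or4P[] /eqP ->; exact: ccin.
have hcd : #|S4| + (k - #|S4|) <= #|[set y in x0 :: p0]| by rewrite cB subnKC // ltnW.
have [S [S4S SB cS]] := middle_set S4B hcd.
have cSk : #|S| = k by rewrite cS subnKC.
exists S; split => //.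
have h1 : tsp e S <= g.
  rewrite /g -sw; apply: least_nat_le; apply: cwl_intro pw lw _.
  by move=> y /(subsetP SB); exact: Bw.
have hs := least_natP (steiner_exists S x0); rewrite -/(steiner e S) in hs.
case/existsP: hs => A /existsP [F /and4P[/eqP cF /forallP hFb SA /forallP hAb]].
have hr := wit_edges hFb.
have hc : forall a b, a \in A -> b \in A -> connect (fun u v => [set u; v] \in F) a b.
  by move=> a b aA bA; have := hAb a; rewrite aA => /forallP /(_ b); rewrite bA.
have inA : forall y, y \in S4 -> y \in A.
  by move=> y yS; apply: (subsetP SA); apply: (subsetP S4S).
have x0A : x0 \in A by apply: inA; rewrite !inE /cc /= eqxx.
have cardA := witness_card hr (fun y yA => hc x0 y x0A yA) x0A.
rewrite cF in cardA.
rewrite ltnNge; apply/negP => hm.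
have hmg : 2 * steiner e S <= size (x0 :: p0) by apply: leq_trans hm h1.
have arc := arc_in_F uc ccyc c3 hr hc cardA hmg.
have [a1 a2 a3 e1 e2] := ar_arcs hh g5.
have allF : forall l, l < g -> [set cc x0 p0 l; cc x0 p0 l.+1] \in F.
  move=> l lg.
  have i0 : cc x0 p0 0 \in A by apply: inA; rewrite !inE eqxx.
  have i1 : cc x0 p0 1 \in A by apply: inA; rewrite !inE eqxx orbT.
  have ih : cc x0 p0 h \in A by apply: inA; rewrite !inE eqxx !orbT.
  have ih1 : cc x0 p0 h.+1 \in A by apply: inA; rewrite !inE eqxx !orbT.
  have ig : cc x0 p0 g \in A by rewrite cc_g.
  case: (ar_cases hh g5 lg) => hl.
  - by apply: (arc 0 1) => //; rewrite add0n ltnW.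
  - by apply: (arc 1 (h - 1)) => //; rewrite e1 // ltnW.
  - by apply: (arc h 1) => //; rewrite addn1.
  - by apply: (arc h.+1 (g - h.+1)) => //; rewrite e2.
have : g <= #|F|.
  rewrite cardE.
  have -> : g = size (map (fun l => [set cc x0 p0 l; cc x0 p0 l.+1]) (iota 0 g)) by rewrite size_map size_iota.
  apply: uniq_leq_size.
    rewrite map_inj_in_uniq ?iota_uniq // => a b; rewrite !mem_iota !add0n => /andP[_ ha] /andP[_ hb].
    exact: E_inj.
  move=> f /mapP [l]; rewrite mem_iota => /andP[_ lg] ->; rewrite mem_enum; exact: allF.
rewrite cF => hgm; exact: (ar_final hmg g5 hgm).
Qed.

End Conn.
End G.

Theorem proposition2 (k : nat) (hk : 4 <= k) :
  (forall (T : finType) (e : rel T),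
      simple_graph e -> is_tree e -> k <= #|T| ->
      W_tsp e k = 2 * W_steiner e k) /\
  (forall (T : finType) (e : rel T),
      simple_graph e -> connected_graph e -> ~ is_tree e -> k <= #|T| ->
      W_tsp e k < 2 * W_steiner e k).
Proof.
split.
- move=> T e [hsym hirr] [hconn hac] kT.
  rewrite /W_tsp /W_steiner big_distrr /=; apply: eq_bigr => S /eqP cS.
  have [x xS] : exists x, x \in S by apply/card_gt0P; rewrite cS; apply: leq_trans hk.
  by apply/eqP; rewrite eqn_leq (tsp_le hsym hirr hconn xS) (tsp_ge hsym hirr hconn S x hac).
- move=> T e [hsym hirr] hconn nt kT.
  have nac : ~ acyclic_graph e by move=> ac; apply: nt; split.
  have [S [cS lt]] := strict_exists hsym hirr hconn hk kT nac.
  rewrite /W_tsp /W_steiner big_distrr /=.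
  rewrite [X in X < _](bigD1 S) ?cS // [X in _ < X](bigD1 S) ?cS //=.
  rewrite -addSn; apply: leq_add => //.
  apply: leq_sum => S' /andP[/eqP cS' _].
  have [x xS] : exists x, x \in S' by apply/card_gt0P; rewrite cS'; apply: leq_trans hk.
  exact: (tsp_le hsym hirr hconn xS).
Qed.
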